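(* Let $k\ge2$, $n>2^k$ and $c=2^k-2$. Let $C=[u_1\oplus\ell_1]\cup\dots\cup[u_s\oplus\ell_s]\subseteq V$, where $0\le u_1<\dots<u_s\le n-1$ and $s$ is minimal. Then $C$ is a maximal covered set, i.e. $C=C(T)$ for some $T\in\mathcal{T}_k$ and there is no $T'\in\mathcal{T}_k$ with $C(T)\subsetneq C(T')$, if and only if (i) $u_1\neq 1$ and $u_s+\ell_s-1\neq n-2$; (ii) $u_{t+1}-(u_t+\ell_t)\ge 2$ for all $t\in\{1,\dots,s-1\}$, and $u_1-(u_s+\ell_s-n)\ge 2$; (iii) $\sum_{t=1}^s\ell_t=c+1-s$ if $\{0,n-1\}\cap C=\emptyset$, and $\sum_{t=1}^s\ell_t=c+2-s$ otherwise.
   Context: $G$ is the path graph with $V=\{0,\dots,n-1\}$ and edges $\{v,v+1\}$, $0\le v\le n-2$. A search strategy for a tree $H$ is a rooted binary tree defined recursively: a single node is a search strategy for any $H$; otherwise the root is labeled with an edge $uv$ of $H$ and its two child subtrees are search strategies for the components $H_u,H_v$ of $H-uv$ containing $u,v$. Nodes get vertex sets: the root gets $V(H)$, the children of a root labeled $uv$ get $V(H_u),V(H_v)$, recursively. $C(T)$ is the set of vertices $v$ with $V(\lambda)=\{v\}$ for a leaf $\lambda$ of $T$. The height of $T$ is the maximum number of edges on a root-to-leaf path; $\mathcal{T}_k$ is the set of search strategies for $G$ of height at most $k$. For integers $u,\ell$, $[u\oplus\ell]=\{w\bmod n: u\le w\le u+\ell-1\}$. *)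

(* Defs.v *)
From mathcomp Require Import all_boot all_order all_algebra.
Set Implicit Arguments. Unset Strict Implicit. Unset Printing Implicit Defensive.
Import Order.TTheory GRing.Theory Num.Theory.

(* Every subtree of the path G = 0 - 1 - ... - (n-1) is a subpath, i.e. an
   interval {a,...,b}; we index the subtree H by its endpoints a <= b.  A
   search strategy is a rooted binary tree whose inner nodes are labeled by an
   edge {v, v+1} (represented by v). *)
Inductive strat : Type :=
  | Leaf : strat
  | Node : nat -> strat -> strat -> strat.

Fixpoint is_strat (a b : nat) (T : strat) : Prop :=
  match T with
  | Leaf => True
  | Node v L R => (a <= v < b)%N /\ is_strat a v L /\ is_strat v.+1 b R
  end.

Fixpoint height (T : strat) : nat :=
  match T with
  | Leaf => 0
  | Node _ L R => (maxn (height L) (height R)).+1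
  end.

Fixpoint covered (a b : nat) (T : strat) (x : nat) : Prop :=
  match T with
  | Leaf => a = b /\ x = a
  | Node v L R => covered a v L x \/ covered v.+1 b R x
  end.

Definition in_Tk (n k : nat) (T : strat) : Prop :=
  is_strat 0 n.-1 T /\ (height T <= k)%N.

Definition CT (n : nat) (T : strat) : nat -> Prop := covered 0 n.-1 T.

Definition maximal_covered_set (n k : nat) (C : nat -> Prop) : Prop :=
  exists T, in_Tk n k T /\ (forall x, C x <-> CT n T x) /\
    ~ (exists T', in_Tk n k T' /\
         (forall x, CT n T x -> CT n T' x) /\
         (exists x, CT n T' x /\ ~ CT n T x)).

Definition cyc_interval (n u l : nat) (x : nat) : Prop :=
  exists w, (u <= w < u + l)%N /\ x = w %% n.

Definition is_rep (n : nat) (C : nat -> Prop) (s : nat) (u l : nat -> nat) : Prop :=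
  (forall t, (1 <= t < s)%N -> (u t < u t.+1)%N) /\
  (forall t, (1 <= t <= s)%N -> (u t <= n - 1)%N) /\
  (forall x, C x <-> exists t, (1 <= t <= s)%N /\ cyc_interval n (u t) (l t) x).

Definition is_min_rep (n : nat) (C : nat -> Prop) (s : nat) (u l : nat -> nat) : Prop :=
  is_rep n C s u l /\
  (forall s' u' l', is_rep n C s' u' l' -> (s <= s')%N).

(* Main.v *)
Require Import Defs.
From mathcomp Require Import all_boot all_order all_algebra zify.
From Stdlib Require Import ClassicalDescription.
Import Order.TTheory GRing.Theory Num.Theory.


Fixpoint covb (a b : nat) (T : strat) (x : nat) : bool :=
  match T with
  | Leaf => (a == b) && (x == a)
  | Node v L R => covb a v L x || covb v.+1 b R x
  end.

Lemma covP a b T x : covered a b T x <-> covb a b T x.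
Proof.
elim: T a b => [|v L IHL R IHR] a b /=.
  by split=> [[-> ->]|/andP[/eqP-> /eqP->]]; rewrite ?eqxx.
by rewrite IHL IHR; split=> [[->|->]|/orP[]]; rewrite ?orbT; auto.
Qed.

Lemma covb_range a b T x : is_strat a b T -> covb a b T x -> a <= x <= b.
Proof.
elim: T a b => [|v L IHL R IHR] a b /=.
  by move=> _ /andP[/eqP-> /eqP->]; rewrite leqnn.
move=> [/andP[h1 h2] [sL sR]] /orP[/(IHL _ _ sL)|/(IHR _ _ sR)]; lia.
Qed.

Definition bad (p : nat -> bool) x : nat := ~~ p x && ~~ p x.-1.
Definition Pc p a b := \sum_(a.+1 <= x < b.+1) bad p x.
Definition I2 (p : nat -> bool) a b := forall x, a <= x <= b -> ~~ p x ->
  (a < x /\ ~~ p x.-1) \/ (x < b /\ ~~ p x.+1).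

Lemma bad_le1 p x : bad p x <= 1.
Proof. by rewrite /bad; case: (_ && _). Qed.

Lemma Pc_split p a v b : a <= v < b ->
  Pc p a b = Pc p a v + bad p v.+1 + Pc p v.+1 b.
Proof.
move=> /andP[h1 h2]; rewrite /Pc (@big_cat_nat _ _ _ v.+1) //=; last lia.
by rewrite (@big_cat_nat _ _ _ v.+2 v.+1) //= ?big_nat1 ?addnA.
Qed.

Lemma Pc_le p a b : a <= b -> Pc p a b <= b - a.
Proof.
move=> hab; rewrite /Pc.
apply: (@leq_trans (\sum_(a.+1 <= x < b.+1) 1)).
  by apply: leq_sum => i _; apply: bad_le1.
by rewrite sum_nat_const_nat muln1; lia.
Qed.

Lemma Pc_aa p a : Pc p a a = 0.
Proof. by rewrite /Pc big_geq. Qed.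

Lemma Pc_ext p q a b : (forall x, a <= x <= b -> p x = q x) -> Pc p a b = Pc q a b.
Proof.
move=> h; rewrite /Pc; apply: eq_big_nat => x hx.
by rewrite /bad !h //; lia.
Qed.

Lemma Pc_pw p q a b : (forall x, a < x <= b -> bad p x <= bad q x) -> Pc p a b <= Pc q a b.
Proof. by move=> h; rewrite /Pc; rewrite !big_nat; apply: leq_sum => x hx; apply: h; lia. Qed.

Lemma I2_ext p q a b : (forall x, a <= x <= b -> p x = q x) -> I2 p a b -> I2 q a b.
Proof.
move=> h H x hx; rewrite -h // => /(H x hx) [[h1 h2]|[h1 h2]].
  by left; split=> //; rewrite -h //; lia.
by right; split=> //; rewrite -h //; lia.
Qed.

Lemma Pc_lt (p : nat -> bool) a b y : a < b -> a <= y <= b -> p y -> Pc p a b < b - a.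
Proof.
move=> hab hy py.
have [hyb|hyb] := ltnP y b.
  rewrite (@Pc_split p a y b); last lia.
  have := @Pc_le p a y ltac:(lia); have := @Pc_le p y.+1 b ltac:(lia).
  rewrite /bad /= py /=; lia.
rewrite (@Pc_split p a y.-1 b); last lia.
have := @Pc_le p a y.-1 ltac:(lia); have := @Pc_le p y.-1.+1 b ltac:(lia).
have -> : y.-1.+1 = y by lia.
rewrite /bad /= py /=; lia.
Qed.

Lemma fwd T a b : a <= b -> is_strat a b T ->
  I2 (covb a b T) a b /\ b.+1 - a <= Pc (covb a b T) a b + 2 ^ height T.
Proof.
elim: T a b => [|v L IHL R IHR] a b hab /=.
  move=> _; split.
    move=> x hx /=; case: (ltnP a b) => h.
      rewrite (_ : (a == b) = false) /=; last by apply/eqP; lia.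
      case: (ltnP a x) => hx2; [left|right]; split=> //; lia.
    have eab : a = b by lia.
    subst; rewrite eqxx /=; have -> : x = b by lia. by rewrite eqxx.
  case: (ltnP a b) => h.
    rewrite /Pc big_nat (eq_bigr (fun _ => 1)); last first.
      move=> i hi; rewrite /bad /=.
      by rewrite (_ : (a == b) = false) //; apply/eqP; lia.
    rewrite -big_nat sum_nat_const_nat muln1 expn0; lia.
  have eab : a = b by lia.
  by subst; rewrite Pc_aa subSnn.
move=> [/andP[h1 h2] [sL sR]].
have [IL PL] := IHL a v h1 sL.
have [IR PR] := IHR v.+1 b h2 sR.
set q := (fun x => covb a v L x || covb v.+1 b R x).
have eL : forall x, a <= x <= v -> covb a v L x = q x.
  move=> x hx; rewrite /q; case: (boolP (covb v.+1 b R x)) => [/(@covb_range _ _ _ x sR)|]; last by rewrite orbF.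
  lia.
have eR : forall x, v.+1 <= x <= b -> covb v.+1 b R x = q x.
  move=> x hx; rewrite /q; case: (boolP (covb a v L x)) => [/(@covb_range _ _ _ x sL)|] //.
  lia.
rewrite -/q; split.
  move=> x hx nq; case: (leqP x v) => hxv.
    have := IL x; rewrite eL ?hx ?hxv; last lia.
    move=> /(_ ltac:(lia) nq) [[y1 y2]|[y1 y2]].
      by left; split=> //; rewrite -eL //; lia.
    by right; split; [lia| rewrite -eL //; lia].
  have := IR x; rewrite eR; last lia.
  move=> /(_ ltac:(lia) nq) [[y1 y2]|[y1 y2]].
    by left; split; [lia| rewrite -eR //; lia].
  by right; split; [lia| rewrite -eR //; lia].
rewrite (@Pc_split q a v b) ?h1 ?h2 //.
rewrite -(@Pc_ext _ _ _ _ eL) -(@Pc_ext _ _ _ _ eR) expnS mul2n -addnn.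
have : height L <= maxn (height L) (height R) by rewrite leq_maxl.
have : height R <= maxn (height L) (height R) by rewrite leq_maxr.
move=> /(leq_pexp2l (isT : 0 < 2)) hr /(leq_pexp2l (isT : 0 < 2)) hl.
lia.
Qed.

Lemma ivt (f : nat -> nat) a b H : a <= b -> f a <= H -> H < f b ->
  exists v, a <= v < b /\ f v <= H < f v.+1.
Proof.
elim: b => [|b IH] hab ha hb.
  have e : a = 0 by lia.
  by subst; lia.
have hab' : a <= b.
  case: (leqP a b) => // h; have e : a = b.+1 by lia.
  by subst; lia.
case: (leqP (f b) H) => hfb.
  by exists b; split; [lia|lia].
by have [v [h1 h2]] := IH hab' ha hfb; exists v; split; lia.
Qed.

Lemma I2_sub p a v b : I2 p a b -> a <= v < b -> (p v || p v.+1) ->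
  I2 p a v /\ I2 p v.+1 b.
Proof.
move=> H hv hc; split=> x hx nx.
  have [[y1 y2]|[y1 y2]] := H x ltac:(lia) nx; first by left.
  right; split=> //; case: (leqP v x) => h; last lia.
  have e : x = v by lia.
  by subst; move: hc y2 nx; case: (p v); case: (p v.+1).
have [[y1 y2]|[y1 y2]] := H x ltac:(lia) nx; last by right.
left; split=> //; case: (leqP x v.+1) => h; last lia.
have e : x = v.+1 by lia.
by subst; move: hc y2 nx; case: (p v); case: (p v.+1).
Qed.

Lemma cut (p : nat -> bool) a b H : a < b -> (exists y, a <= y <= b /\ p y) ->
  b.+1 - a <= Pc p a b + 2 * H -> 1 <= H ->
  exists v, a <= v < b /\ (p v || p v.+1) /\ v.+1 - a <= Pc p a v + H /\
    b.+1 - v.+1 <= Pc p v.+1 b + H.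
Proof.
move=> hab [y [hy py]] hP hH.
pose g v := v.+1 - a - Pc p a v.
case: (leqP (g b) H) => hgb.
  pose v := if y < b then y else y.-1.
  have hv : a <= v < b by rewrite /v; case: ifP; lia.
  have hc : p v || p v.+1.
    rewrite /v; case: ifP => h; first by rewrite py.
    have -> : y.-1.+1 = y by lia.
    by rewrite py orbT.
  exists v; split=> //; split=> //.
  have := @Pc_split p a v b hv; rewrite /bad /=.
  have -> : (~~ p v.+1 && ~~ p v) = false by move: hc; case: (p v); case: (p v.+1).
  have := @Pc_le p a v ltac:(lia); have := @Pc_le p v.+1 b ltac:(lia).
  move: hgb; rewrite /g; lia.
have ga : g a <= H by rewrite /g Pc_aa; lia.
have hab2 : a <= b by lia.
have [v [hv /andP[g1 g2]]] := @ivt g a b H hab2 ga hgb.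
have e1 := @Pc_split p a v v.+1 ltac:(lia); rewrite Pc_aa addn0 in e1.
have hc : p v || p v.+1.
  move: g1 g2; rewrite /g e1 /bad /=.
  have := @Pc_le p a v ltac:(lia).
  by case: (p v); case: (p v.+1) => //=; lia.
have hb0 : bad p v.+1 = 0.
  by rewrite /bad /=; move: hc; case: (p v); case: (p v.+1).
exists v; split=> //; split=> //.
have := @Pc_split p a v b hv; rewrite hb0.
have := @Pc_le p a v ltac:(lia); have := @Pc_le p v.+1 b ltac:(lia).
move: g1 g2 hgb hP; rewrite /g e1 hb0; lia.
Qed.

Lemma bwd h : forall a b (p : nat -> bool), a <= b -> I2 p a b ->
  b.+1 - a <= Pc p a b + 2 ^ h ->
  exists T, is_strat a b T /\ height T <= h /\
    forall x, covered a b T x <-> (a <= x <= b /\ p x).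
Proof.
elim: h => [|h IH] a b p hab HI hP.
- case: (ltnP a b) => h.
    case: (boolP (has p (index_iota a b.+1))) => [/hasP [y]|hn].
      rewrite mem_index_iota => hy py.
      by have := @Pc_lt p a b y h ltac:(lia) py; move: hP; rewrite expn0; lia.
    exists Leaf; split=> //; split=> // x /=; split.
      by move=> [e1 e2]; lia.
    move=> [hx px]; case/negP: hn; apply/hasP; exists x => //.
    by rewrite mem_index_iota; lia.
  have e : a = b by lia.
  subst; have pb : p b.
    case: (boolP (p b)) => // nb; have := HI b ltac:(lia) nb; lia.
  exists Leaf; split=> //; split=> // x /=; split.
    by move=> [_ ->]; rewrite leqnn.
  by move=> [hx px]; split=> //; lia.
- case: (ltnP a b) => hlt; last first.
    have e : a = b by lia.
    subst; have pb : p b.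
      case: (boolP (p b)) => // nb; have := HI b ltac:(lia) nb; lia.
    exists Leaf; split=> //; split=> // x /=; split.
      by move=> [_ ->]; rewrite leqnn.
    by move=> [hx px]; split=> //; lia.
  case: (boolP (has p (index_iota a b.+1))) => [/hasP [y]|hn]; last first.
    exists Leaf; split=> //; split=> // x /=; split.
      by move=> [e1 e2]; lia.
    move=> [hx px]; case/negP: hn; apply/hasP; exists x => //.
    by rewrite mem_index_iota; lia.
  rewrite mem_index_iota => hy py.
  have hP2 : b.+1 - a <= Pc p a b + 2 * 2 ^ h by rewrite -expnS.
  have hH : 1 <= 2 ^ h by rewrite expn_gt0.
  have hy' : exists y, a <= y <= b /\ p y by exists y.
  have [v [hv [hc [hL hR]]]] := @cut p a b (2 ^ h) hlt hy' hP2 hH.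
  have [IL IR] := @I2_sub p a v b HI hv hc.
  have [TL [sL [htL cL]]] := IH a v p ltac:(lia) IL hL.
  have [TR [sR [htR cR]]] := IH v.+1 b p ltac:(lia) IR hR.
  exists (Node v TL TR); split; first by split.
  split; first by rewrite /= ltnS geq_max htL htR.
  move=> x /=; rewrite cL cR; split.
    by move=> [[h1 h2]|[h1 h2]]; split=> //; lia.
  move=> [h1 h2]; case: (leqP x v) => h3; [left|right]; split=> //; lia.
Qed.

Lemma Pc_mono (p q : nat -> bool) a b : (forall x, a <= x <= b -> p x -> q x) ->
  Pc q a b <= Pc p a b.
Proof.
move=> h; apply: Pc_pw => x hx; rewrite /bad.
case: (boolP (q x)) => qx; first by [].
case: (boolP (q x.-1)) => qx1 //=.
have px : p x = false.
  by apply/negP => px; have := h x ltac:(lia) px; rewrite (negbTE qx).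
have px1 : p x.-1 = false.
  by apply/negP => px'; have := h x.-1 ltac:(lia) px'; rewrite (negbTE qx1).
by rewrite px px1.
Qed.
Lemma Pc_strict (p q : nat -> bool) a b y : I2 p a b ->
  (forall x, a <= x <= b -> p x -> q x) -> a <= y <= b -> q y -> ~~ p y ->
  Pc q a b < Pc p a b.
Proof.
move=> HI h hy qy py.
have hsub : forall a' b', a <= a' -> b' <= b -> Pc q a' b' <= Pc p a' b'.
  by move=> a' b' h1 h2; apply: Pc_mono => x hx; apply: h; lia.
have [[y1 y2]|[y1 y2]] := HI y hy py.
  have hv : a <= y.-1 < b by lia.
  rewrite (@Pc_split p a y.-1 b hv) (@Pc_split q a y.-1 b hv).
  have := hsub a y.-1 (leqnn a) ltac:(lia).
  have := hsub y.-1.+1 b ltac:(lia) (leqnn b).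
  have -> : y.-1.+1 = y by lia.
  rewrite /bad qy py y2 /=.
  move: (Pc q a y.-1) (Pc p a y.-1) (Pc q y b) (Pc p y b) => A B C D; lia.
have hv : a <= y < b by lia.
rewrite (@Pc_split p a y b hv) (@Pc_split q a y b hv).
have := hsub a y (leqnn a) ltac:(lia).
have := hsub y.+1 b ltac:(lia) (leqnn b).
rewrite /bad /= qy py y2 /=.
move: (Pc q a y) (Pc p a y) (Pc q y.+1 b) (Pc p y.+1 b) => A B C D; lia.
Qed.

Lemma Pc_pos_ex (p : nat -> bool) a b : 0 < Pc p a b ->
  exists x, (a < x <= b) && (bad p x == 1).
Proof.
move=> hP; case: (boolP (has (fun x => bad p x == 1) (index_iota a.+1 b.+1))).
  move=> /hasP [x]; rewrite mem_index_iota => hx hb; exists x.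
  by rewrite hb andbT; lia.
move=> hn; move: hP; rewrite /Pc big_seq big1 // => x hx.
have := bad_le1 p x; case: (boolP (bad p x == 1)) => [hb|]; last lia.
by case/negP: hn; apply/hasP; exists x.
Qed.

Lemma extend (p : nat -> bool) a b : a <= b -> I2 p a b -> 0 < Pc p a b ->
  exists q : nat -> bool, I2 q a b /\ Pc p a b <= Pc q a b + 1 /\
    (forall x, p x -> q x) /\ (exists y, a <= y <= b /\ q y /\ ~~ p y).
Proof.
move=> hab HI hP.
have [x0 /andP[hx0 hb0] hmin] := find_ex_minn (@Pc_pos_ex p a b hP).
have [px0 py0] : ~~ p x0 /\ ~~ p x0.-1.
  by move: hb0; rewrite /bad; case: (p x0); case: (p x0.-1).
set y0 := x0.-1.
have hleft : a < y0 -> p y0.-1.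
  move=> hy; case: (boolP (p y0.-1)) => // ny.
  have : (a < y0 <= b) && (bad p y0 == 1) by rewrite /bad py0 ny /=; lia.
  by move/hmin; lia.
set B := ~~ ((x0.+1 <= b) && ~~ p x0.+1).
have [q qE] : {q : nat -> bool | forall x, q x = p x || (x == y0) || (B && (x == x0))}.
  by exists (fun x => p x || (x == y0) || (B && (x == x0))).
exists q; split; last split; last split.
- move=> x hx; rewrite qE !negb_or => /andP[/andP[nx ny] nb].
  have [[l1 l2]|[r1 r2]] := HI x hx nx.
  + case: (eqVneq x.-1 y0) => e1.
      have ex : x = x0 by rewrite /y0 in e1; lia.
      have hB : B = false by move: nb; rewrite ex eqxx andbT; case: (B).
      move: hB; rewrite /B => /negbFE /andP[h1 h2].
      right; split; first lia.
      rewrite qE ex (negbTE h2) /=.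
      have -> : (x0.+1 == y0) = false by apply/eqP; rewrite /y0; lia.
      have -> : (x0.+1 == x0) = false by apply/eqP; lia.
      by rewrite andbF.
    case: (eqVneq x.-1 x0) => e2.
      have ex : x = x0.+1 by lia.
      case: (boolP B) => hB.
        move: hB; rewrite /B negb_and negbK -ex (negbTE nx) orbF; lia.
      by left; split => //; rewrite qE (negbTE l2) (negbTE hB) (negbTE e1).
    left; split => //; rewrite qE (negbTE l2) /= (negbTE e1) /=.
    by rewrite (negbTE e2) andbF.
  + case: (eqVneq x.+1 y0) => e1.
      have hy : a < y0 by lia.
      have := hleft hy; rewrite -e1 /= => px; by rewrite px in nx.
    case: (eqVneq x.+1 x0) => e2.
      have : x = y0 by rewrite /y0; lia.
      by move=> ex; rewrite ex eqxx in ny.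
    right; split => //; rewrite qE (negbTE r2) /= (negbTE e1) /=.
    by rewrite (negbTE e2) andbF.
- have hv : a <= y0 < b by rewrite /y0; lia.
  rewrite (@Pc_split p a y0 b hv) (@Pc_split q a y0 b hv).
  have h1 : Pc p a y0 <= Pc q a y0.
    apply: Pc_pw => x hx; rewrite /bad.
    case: (boolP (p x)) => px //=; case: (boolP (p x.-1)) => px1 //=.
    rewrite qE (negbTE px) /=.
    case: (eqVneq x y0) => e1.
      have hy : a < y0 by lia.
      by have := hleft hy; rewrite -e1 (negbTE px1).
    rewrite qE (negbTE px1) /=.
    have -> : (x.-1 == y0) = false by apply/eqP; lia.
    have -> : (x == x0) = false by apply/eqP; rewrite /y0 in hx; lia.
    have -> : (x.-1 == x0) = false by apply/eqP; rewrite /y0 in hx; lia.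
    by rewrite !andbF.
  have h2 : Pc p y0.+1 b <= Pc q y0.+1 b.
    apply: Pc_pw => x hx; rewrite /bad.
    case: (boolP (p x)) => px //=; case: (boolP (p x.-1)) => px1 //=.
    rewrite qE (negbTE px) /=.
    have -> : (x == y0) = false by apply/eqP; rewrite /y0 in hx; lia.
    case: (eqVneq x x0) => e1; first by rewrite /y0 in hx; lia.
    rewrite andbF /= qE (negbTE px1) /=.
    have -> : (x.-1 == y0) = false by apply/eqP; rewrite /y0 in hx; lia.
    case: (eqVneq x.-1 x0) => e2; last by rewrite andbF.
    case: (boolP B) => hB //.
    move: hB; rewrite /B negb_and negbK.
    have ex : x = x0.+1 by lia.
    rewrite -ex (negbTE px) orbF; lia.
  have := bad_le1 p y0.+1.
  move: (Pc p a y0) (Pc q a y0) (Pc p y0.+1 b) (Pc q y0.+1 b) h1 h2 => A1 A2 A3 A4.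
  lia.
- by move=> x px; rewrite qE px.
- exists y0; split; first by rewrite /y0; lia.
  by rewrite qE eqxx orbT.
Qed.

Theorem max_iff n k (C : nat -> Prop) (p : nat -> bool) : 2 ^ k < n ->
  (forall x, C x <-> p x) -> (forall x, p x -> x < n) ->
  maximal_covered_set n k C <-> I2 p 0 n.-1 /\ n = Pc p 0 n.-1 + 2 ^ k.
Proof.
move=> hn hC hp.
have n0 : 0 < n by lia.
have eN : n.-1.+1 - 0 = n by lia.
split.
- move=> [T [[sT hT] [hCT hno]]].
  have eq : forall x, 0 <= x <= n.-1 -> covb 0 n.-1 T x = p x.
    move=> x hx; apply/idP/idP.
      by move/covP => h; apply/hC; apply/hCT.
    by move=> /hC /hCT /covP.
  have [I P] := @fwd T 0 n.-1 (leq0n _) sT.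
  have HI : I2 p 0 n.-1 := @I2_ext _ _ _ _ eq I.
  rewrite (@Pc_ext _ _ _ _ eq) eN in P.
  have := leq_pexp2l (isT : 0 < 2) hT => hT2.
  split=> //.
  case: (ltnP n (Pc p 0 n.-1 + 2 ^ k)) => h; last by lia.
  have hP0 : 0 < Pc p 0 n.-1 by lia.
  have [q [Iq [Pq [pq [y [hy [qy py]]]]]]] := @extend p 0 n.-1 (leq0n _) HI hP0.
  have hb : n.-1.+1 - 0 <= Pc q 0 n.-1 + 2 ^ k by lia.
  have [T' [sT' [hT' cT']]] := @bwd k 0 n.-1 q (leq0n _) Iq hb.
  case: hno; exists T'; split; first by split.
  split.
    move=> x /covP hx; have := @covb_range _ _ _ x sT hx => hr.
    rewrite /CT cT'; split=> //; apply: pq; by rewrite -eq.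
  exists y; split; first by rewrite /CT cT'.
  rewrite /CT covP eq //; exact/negP.
- move=> [HI hP].
  have hb : n.-1.+1 - 0 <= Pc p 0 n.-1 + 2 ^ k by lia.
  have [T [sT [hT cT]]] := @bwd k 0 n.-1 p (leq0n _) HI hb.
  exists T; split; first by split.
  split.
    move=> x; rewrite /CT cT hC; split; last by case.
    by move=> px; have := hp x px; split=> //; lia.
  move=> [T' [[sT' hT'] [sub [y [y1 y2]]]]].
  pose q := covb 0 n.-1 T'.
  have [I' P'] := @fwd T' 0 n.-1 (leq0n _) sT'.
  have hy : 0 <= y <= n.-1 by apply: (@covb_range _ _ T'); [exact sT' | apply/covP].
  have hlt : Pc q 0 n.-1 < Pc p 0 n.-1.
    apply: (@Pc_strict p q 0 n.-1 y HI) => //.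
    + move=> x hx px; apply/covP; apply: sub; rewrite /CT cT; split=> //.
    + by apply/covP.
    + by apply/negP => py; apply: y2; rewrite /CT cT.
  have := leq_pexp2l (isT : 0 < 2) hT' => hT2.
  move: P'; rewrite eN -/q; lia.
Qed.


Lemma rep_lt n C s u l x : 0 < n -> is_rep n C s u l -> C x -> x < n.
Proof.
move=> n0 [_ [_ h]] /h [t [_ [w [_ ->]]]]; exact: ltn_pmod.
Qed.

Lemma rep_mono n C s u l i j : is_rep n C s u l -> 1 <= i -> i <= j -> j <= s -> u i <= u j.
Proof.
move=> [hinc _] hi; elim: j => [|j IH] hij hjs; first lia.
case: (ltnP i j.+1) => h; last by have -> : i = j.+1 by lia.
have := hinc j ltac:(lia); have := IH ltac:(lia) ltac:(lia); lia.
Qed.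

Lemma rep_smono n C s u l i j : is_rep n C s u l -> 1 <= i -> i < j -> j <= s -> u i < u j.
Proof.
move=> hr hi hij hjs; have [hinc _] := hr.
have := hinc j.-1 ltac:(lia); have := @rep_mono n C s u l i j.-1 hr hi ltac:(lia) ltac:(lia).
have -> : j.-1.+1 = j by lia. lia.
Qed.

Lemma del_rep n C s u l j (l2 : nat -> nat) : is_rep n C s u l -> 1 <= j <= s ->
  (forall x, (exists t, 1 <= t <= s /\ t != j /\ cyc_interval n (u t) (l2 t) x) <-> C x) ->
  is_rep n C s.-1 (fun i => if i < j then u i else u i.+1)
                  (fun i => if i < j then l2 i else l2 i.+1).
Proof.
move=> hr hj hU; have [hinc [hb hC]] := hr; split; last split.
- move=> t ht /=.
  case: (ltnP t j) => h1; case: (ltnP t.+1 j) => h2.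
  + apply: hinc; lia.
  + apply: (@rep_smono n C s u l t t.+2 hr); lia.
  + lia.
  + apply: hinc; lia.
- by move=> t ht /=; case: ifP => _; apply: hb; lia.
- move=> x; rewrite -(hU x); split; last first.
    move=> [t [ht /=]]; case: (ltnP t j) => h.
      by move=> hc; exists t; split; [lia|split=> //; apply/eqP; lia].
    by move=> hc; exists t.+1; split; [lia|split=> //; apply/eqP; lia].
  move=> [t [ht [tj hc]]].
  case: (ltnP t j) => h.
    by exists t; split; [lia|rewrite /= h].
  exists t.-1; split; first by move/eqP: tj; lia.
  have -> : (t.-1 < j) = false by move/eqP: tj; lia.
  by have -> : t.-1.+1 = t by lia.
Qed.

Lemma cyc_merge n u1 l1 u2 l2 x : u1 <= u2 <= u1 + l1 ->
  cyc_interval n u1 (maxn l1 (u2 + l2 - u1)) x <->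
  cyc_interval n u1 l1 x \/ cyc_interval n u2 l2 x.
Proof.
move=> h; split.
  move=> [w [hw ->]]; case: (ltnP w (u1 + l1)) => h2.
    by left; exists w; split=> //; lia.
  by right; exists w; split=> //; lia.
by move=> [[w [hw ->]]|[w [hw ->]]]; exists w; split=> //; lia.
Qed.

Lemma cyc_shift n u l x : cyc_interval n (u + n) l x <-> cyc_interval n u l x.
Proof.
split.
  move=> [w [hw ->]]; exists (w - n); split; first lia.
  by rewrite -{1}(subnK (_ : n <= w)) ?modnDr //; lia.
move=> [w [hw ->]]; exists (w + n); split; first lia.
by rewrite modnDr.
Qed.

Lemma cyc0 n u x : ~ cyc_interval n u 0 x.
Proof. by move=> [w [hw _]]; lia. Qed.

Section MinRep.
Variables (n : nat) (C : nat -> Prop) (s : nat) (u l : nat -> nat).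
Hypothesis hmin : is_min_rep n C s u l.

Let hr := proj1 hmin.

Lemma no_del j l2 : 1 <= j <= s ->
  (forall x, (exists t, 1 <= t <= s /\ t != j /\ cyc_interval n (u t) (l2 t) x) <-> C x) ->
  False.
Proof.
move=> hj hU; have := proj2 hmin _ _ _ (@del_rep n C s u l j l2 hr hj hU); lia.
Qed.

Lemma M1 t : 1 <= t <= s -> 0 < l t.
Proof.
move=> ht; case: (posnP (l t)) => // h0; exfalso.
apply: (@no_del t l ht) => x; have [_ [_ hC]] := hr; rewrite hC; split.
  by move=> [t' [h1 [_ h2]]]; exists t'.
move=> [t' [h1 h2]]; exists t'; split=> //; split=> //.
apply/eqP => e; subst t'; rewrite h0 in h2; exact: cyc0 h2.
Qed.

Lemma M2 t : 1 <= t < s -> u t + l t < u t.+1.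
Proof.
move=> ht; case: (ltnP (u t + l t) (u t.+1)) => // h; exfalso.
have hut := (proj1 hr) t ht.
pose l2 := fun i => if i == t then maxn (l t) (u t.+1 + l t.+1 - u t) else l i.
apply: (@no_del t.+1 l2 ltac:(lia)) => x; have [_ [_ hC]] := hr; rewrite hC; split.
  move=> [t' [h1 [h2 h3]]]; rewrite /l2 in h3; case: (eqVneq t' t) => e.
    subst t'; move: h3; rewrite eqxx cyc_merge; last lia.
    by move=> [h3|h3]; [exists t | exists t.+1]; split=> //; lia.
  by exists t'; split=> //; rewrite (negbTE e) in h3.
move=> [t' [h1 h2]]; case: (eqVneq t' t.+1) => e.
  subst t'; exists t; split; first lia; split; first by apply/eqP; lia.
  by rewrite /l2 eqxx cyc_merge; [right|lia].
case: (eqVneq t' t) => e2.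
  subst t'; exists t; split=> //; split=> //.
  by rewrite /l2 eqxx cyc_merge; [left|lia].
exists t'; split=> //; split=> //; by rewrite /l2 (negbTE e2).
Qed.

Lemma M3 : 2 <= s -> u s + l s < u 1 + n.
Proof.
move=> hs; case: (ltnP (u s + l s) (u 1 + n)) => // h; exfalso.
have hb : u s <= n - 1 := (proj1 (proj2 hr)) s ltac:(lia).
pose l2 := fun i => if i == s then maxn (l s) (u 1 + n + l 1 - u s) else l i.
apply: (@no_del 1 l2 ltac:(lia)) => x; have [_ [_ hC]] := hr; rewrite hC; split.
  move=> [t' [h1 [h2 h3]]]; rewrite /l2 in h3; case: (eqVneq t' s) => e.
    subst t'; move: h3; rewrite eqxx cyc_merge; last lia.
    move=> [h3|h3]; [exists s | exists 1]; split=> //; first lia.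
    by rewrite -cyc_shift.
  by exists t'; split=> //; rewrite (negbTE e) in h3.
move=> [t' [h1 h2]]; case: (eqVneq t' 1) => e.
  subst t'; exists s; split; first lia; split; first by apply/eqP; lia.
  by rewrite /l2 eqxx cyc_merge; [right; rewrite cyc_shift|lia].
case: (eqVneq t' s) => e2.
  subst t'; exists s; split=> //; split=> //.
  by rewrite /l2 eqxx cyc_merge; [left|lia].
exists t'; split=> //; split=> //; by rewrite /l2 (negbTE e2).
Qed.

End MinRep.


Lemma mod_win n m w w' : m <= w < m + n -> m <= w' < m + n -> w %% n = w' %% n -> w = w'.
Proof.
move=> h1 h2 e.
wlog le : w w' h1 h2 e / w <= w'.
  move=> H; case: (leqP w w') => h; first exact: H.
  by apply/esym/H => //; lia.
have : w' == w %[mod n] by apply/eqP.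
rewrite eqn_mod_dvd // => hd.
case: (posnP (w' - w)) => h0; first lia.
have := dvdn_leq h0 hd; lia.
Qed.

Lemma mod_pred n w : 0 < w %% n -> (w.-1) %% n = (w %% n).-1.
Proof.
move=> h; case: (posnP n) => n0; first by subst; rewrite !modn0.
rewrite {1}(divn_eq w n).
have hr := ltn_pmod w n0.
move: (w %/ n) (w %% n) h hr => q r h hr.
have -> : (q * n + r).-1 = q * n + r.-1 by lia.
rewrite modnMDl modn_small //; lia.
Qed.

Lemma mod_succ n w : (w %% n).+1 < n -> (w.+1) %% n = (w %% n).+1.
Proof.
move=> h; rewrite {1}(divn_eq w n) -addnS modnMDl modn_small //.
Qed.

Lemma mod_addn n w : (w + n) %% n = w %% n.
Proof. exact: modnDr. Qed.

Lemma mod_prevn n w : 0 < n -> 0 < w -> (w + n.-1) %% n = (w.-1) %% n.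
Proof.
move=> + h; case: n => [|n] //= _.
have -> : w + n = w.-1 + n.+1 by lia.
by rewrite modnDr.
Qed.

Lemma sum_window n (f : nat -> nat) m :
  \sum_(m <= w < m + n) f (w %% n) = \sum_(0 <= x < n) f x.
Proof.
elim: m => [|m IH].
  rewrite add0n; apply: eq_big_nat => x hx; rewrite modn_small //; lia.
case: n IH => [|n] IH; first by rewrite !big_geq //; lia.
rewrite -IH (@big_ltn _ _ _ m); last lia.
rewrite addSn big_nat_recr /=; last lia.
rewrite (_ : (m + n.+1) %% n.+1 = m %% n.+1); last by rewrite modnDr.
by rewrite addnC.
Qed.


Section Arcs.
Variables (n : nat) (C : nat -> Prop) (s : nat) (u l : nat -> nat) (p : nat -> bool).
Hypotheses (n3 : 2 < n) (s1 : 0 < s) (hr : is_rep n C s u l)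
  (hM1 : forall t, 1 <= t <= s -> 0 < l t)
  (hM2 : forall t, 1 <= t < s -> u t + l t < u t.+1)
  (hM3 : u s + l s < u 1 + n) (hp : forall x, C x <-> p x).

Definition c w := p (w %% n).
Definition e t := if t < s then u t.+1 else u 1 + n.
Definition arc t w := (u t <= w) && (w < u t + l t).

Lemma umono i j : 1 <= i <= j -> j <= s -> u i <= u j.
Proof. move=> /andP[h1 h2] h3; exact: (@rep_mono n C s u l i j hr). Qed.

Lemma ubound t : 1 <= t <= s -> u t <= n - 1.
Proof. by move=> h; apply: (proj1 (proj2 hr)). Qed.

Lemma endmono i j : 1 <= i <= j -> j <= s -> u i + l i <= u j + l j.
Proof.
move=> hij hj; case: (ltnP i j) => h; last by have -> : i = j by lia.
have := @hM2 i ltac:(lia); have := @umono i.+1 j ltac:(lia) hj; lia.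
Qed.

Lemma e_gt t : 1 <= t <= s -> u t + l t < e t.
Proof.
move=> ht; rewrite /e; case: ifP => h; first by apply: hM2; lia.
have -> : t = s by lia. exact: hM3.
Qed.

Lemma e_le t : 1 <= t <= s -> e t <= u 1 + n.
Proof.
move=> ht; rewrite /e; case: ifP => h //.
have := @ubound t.+1 ltac:(lia); lia.
Qed.

Lemma e_ge t : 1 <= t <= s -> u 1 <= e t.
Proof. move=> ht; have := @e_gt t ht; have := @umono 1 t ltac:(lia) ltac:(lia); lia. Qed.

Lemma arc_c t w : 1 <= t <= s -> arc t w -> c w.
Proof.
move=> ht /andP[h1 h2]; rewrite /c; apply/hp; apply/(proj2 (proj2 hr)).
by exists t; split=> //; exists w; split=> //; apply/andP.
Qed.

Lemma c_arc w : u 1 <= w < u 1 + n -> c w -> exists t, 1 <= t <= s /\ arc t w.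
Proof.
move=> hw /hp /(proj2 (proj2 hr)) [t [ht [w' [hw' e']]]].
exists t; split=> //.
have h1 := @umono 1 t ltac:(lia) ltac:(lia).
have h2 := @endmono t s ltac:(lia) (leqnn s).
have := @mod_win n (u 1) w w' hw ltac:(lia) e'.
by move=> ew; rewrite /arc ew.
Qed.

Lemma gap_nc t w : 1 <= t <= s -> u t + l t <= w < e t -> ~~ c w.
Proof.
move=> ht hw; apply/negP => hc.
have h1 := @umono 1 t ltac:(lia) ltac:(lia).
have h2 := @e_le t ht.
have [t' [ht' /andP[a1 a2]]] := @c_arc w ltac:(lia) hc.
case: (ltnP t' t.+1) => h.
  have := @endmono t' t ltac:(lia) ltac:(lia); lia.
have ts : t < s by lia.
move: hw; rewrite /e ts => hw.
have := @umono t.+1 t' ltac:(lia) ltac:(lia); lia.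
Qed.

Lemma c_lt w : w < n -> c w = p w.
Proof. by move=> h; rewrite /c modn_small. Qed.

Definition bw w : nat := ~~ c w && ~~ c (w + n.-1).

Lemma bw_prev w : 0 < w -> bw w = ~~ c w && ~~ c w.-1.
Proof. by move=> h; rewrite /bw /c mod_prevn //; lia. Qed.

Lemma seg t : 1 <= t <= s -> \sum_(u t <= w < e t) bw w + (l t).+1 = e t - u t.
Proof.
move=> ht; have he := @e_gt t ht; have hl := @hM1 t ht.
rewrite (@big_cat_nat _ _ _ (u t + l t)) /=; try lia.
rewrite (@big_ltn _ _ _ (u t + l t)) //.
have -> : \sum_(u t <= i < u t + l t) bw i = 0.
  rewrite big_nat big1 // => i hi; rewrite /bw (@arc_c t i) //.
have -> : bw (u t + l t) = 0.
  rewrite bw_prev; last lia.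
  by rewrite (@arc_c t (u t + l t).-1) ?andbF //; rewrite /arc; lia.
have -> : \sum_((u t + l t).+1 <= i < e t) bw i = \sum_((u t + l t).+1 <= i < e t) 1.
  apply: eq_big_nat => i hi; rewrite bw_prev; last lia.
  rewrite (@gap_nc t i) ?(@gap_nc t i.-1) //; lia.
rewrite sum_nat_const_nat; lia.
Qed.

Lemma total j : 1 <= j <= s ->
  \sum_(u 1 <= w < e j) bw w + \sum_(1 <= t < j.+1) (l t).+1 = e j - u 1.
Proof.
elim: j => [|j IH] hj; first lia.
case: (posnP j) => j0.
  subst j; rewrite big_nat1; exact: (@seg 1).
have hj' : 1 <= j <= s by lia.
have IH' := IH hj'.
have ee : e j = u j.+1 by rewrite /e; case: ifP => //; lia.
have h1 := @e_ge j hj'.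
have h2 := @e_gt j.+1 hj.
rewrite (@big_cat_nat _ _ _ (e j)) /=; try lia.
rewrite big_nat_recr /=; last lia.
have := @seg j.+1 hj; rewrite -ee.
move: IH'; move: (\sum_(u 1 <= i < e j) bw i) (\sum_(e j <= i < e j.+1) bw i)
  (\sum_(1 <= i < j.+1) (l i).+1) => A1 A2 A3.
lia.
Qed.

Definition F x : nat := ~~ p x && ~~ p ((x + n.-1) %% n).

Lemma count_all : \sum_(0 <= x < n) F x + \sum_(1 <= t < s.+1) (l t).+1 = n.
Proof.
have := @total s ltac:(lia).
have es : e s = u 1 + n by rewrite /e ltnn.
rewrite es -(sum_window n F (u 1)).
have -> : \sum_(u 1 <= w < u 1 + n) bw w = \sum_(u 1 <= w < u 1 + n) F (w %% n).
  apply: eq_big_nat => w hw; rewrite /bw /F /c modnDml //.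
lia.
Qed.

Lemma Q_Pc : \sum_(0 <= x < n) F x = (~~ p 0 && ~~ p n.-1) + Pc p 0 n.-1.
Proof.
rewrite big_ltn; last lia.
rewrite /F add0n modn_small; last lia.
congr (_ + _); rewrite /Pc (_ : n.-1.+1 = n); last lia.
apply: eq_big_nat => x hx; rewrite /bad mod_prevn; try lia.
rewrite modn_small //; lia.
Qed.

Lemma c_per w : c (w + n) = c w.
Proof. by rewrite /c modnDr. Qed.

Lemma c_u t : 1 <= t <= s -> c (u t).
Proof. move=> ht; apply: (@arc_c t) => //; rewrite /arc leqnn /=; have := @hM1 t ht; lia. Qed.

Lemma I2_char : I2 p 0 n.-1 <->
  [/\ u 1 <> 1, u s + l s <> n.-1 & forall t, 1 <= t <= s -> u t + l t + 2 <= e t].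
Proof.
have es : e s = u 1 + n by rewrite /e ltnn.
have hs1 := @hM1 s ltac:(lia).
have hus := @ubound s ltac:(lia).
split.
- move=> HI; split.
  + move=> e1.
    have p1 : p 1 by rewrite -c_lt; [rewrite -e1; apply: c_u|]; lia.
    have p0 : ~~ p 0.
      have := @gap_nc s n ltac:(lia) ltac:(lia); by rewrite /c modnn.
    have := HI 0 ltac:(lia) p0; rewrite p1; lia.
  + move=> e2.
    have pm : p (n.-1).-1.
      rewrite -c_lt; last lia.
      apply: (@arc_c s) => //; rewrite /arc; lia.
    have pn : ~~ p n.-1.
      rewrite -c_lt; last lia.
      apply: (@gap_nc s); lia.
    have := HI n.-1 ltac:(lia) pn; rewrite pm; lia.
  + move=> t ht; case: (leqP (u t + l t + 2) (e t)) => // h; exfalso.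
    have he := @e_gt t ht.
    set w := u t + l t.
    have nc : ~~ c w by apply: (@gap_nc t) => //; lia.
    have hx : 0 <= w %% n <= n.-1 by have := @ltn_pmod w n ltac:(lia); lia.
    have := HI (w %% n) hx nc; move=> [[l1 l2]|[r1 r2]].
    * move: l2; rewrite -mod_pred // -/(c w.-1) (@arc_c t) //.
      rewrite /arc /w; have := @hM1 t ht; lia.
    * move: r2; rewrite -mod_succ; last lia.
      rewrite -/(c w.+1) (_ : w.+1 = e t); last lia.
      rewrite /e; case: ifP => hts.
        by rewrite c_u //; lia.
      by rewrite c_per c_u //; lia.
- move=> [h1 h2 h3] x hx nx.
  case: (posnP x) => x0.
    subst x; right; split; first lia.
    apply/negP => p1.
    case: (posnP (u 1)) => u0.
      have := @c_u 1 ltac:(lia); rewrite u0 c_lt; last lia.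
      by rewrite (negbTE nx).
    have hu2 : 2 <= u 1 by lia.
    have cn1 : c n.+1 by rewrite /c -addn1 addnC modnDr modn_small //; lia.
    have := @ubound 1 ltac:(lia) => hb1.
    have [t [ht /andP[a1 a2]]] := @c_arc n.+1 ltac:(lia) cn1.
    have := @ubound t ht => hb.
    have : c n by apply: (@arc_c t) => //; rewrite /arc; lia.
    by rewrite /c modnn (negbTE nx).
  case: (eqVneq x n.-1) => xn.
    subst x; left; split; first lia.
    apply/negP => pm.
    case: (leqP (u 1) (n.-1).-1) => hu1; last first.
      move: nx; rewrite -c_lt; last lia.
      by rewrite (_ : n.-1 = u 1) ?c_u //; have := @ubound 1 ltac:(lia); lia.
    have cm : c (n.-1).-1 by rewrite c_lt //; lia.
    have [t [ht /andP[a1 a2]]] := @c_arc (n.-1).-1 ltac:(lia) cm.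
    have ncn : ~~ c n.-1 by rewrite c_lt //; lia.
    have ea : u t + l t = n.-1.
      case: (ltnP (n.-1) (u t + l t)) => h; last lia.
      by move: ncn; rewrite (@arc_c t) //; rewrite /arc; lia.
    case: (ltnP t s) => hts.
      have := @hM2 t ltac:(lia); have := @ubound t.+1 ltac:(lia); lia.
    by apply: h2; have -> : s = t by lia.
  case: (boolP (p x.-1)) => px1; last by left; split => //; lia.
  case: (boolP (p x.+1)) => px2; last by right; split => //; lia.
  exfalso.
  pose w := if u 1 <= x then x else x + n.
  have hw : u 1 <= w < u 1 + n by rewrite /w; case: ifP; have := @ubound 1 ltac:(lia); lia.
  have wm : w %% n = x by rewrite /w; case: ifP => _; rewrite ?modnDr modn_small //; lia.
  have cw : ~~ c w by rewrite /c wm.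
  have cw1 : c w.-1 by rewrite /c mod_pred wm //; lia.
  have cw2 : c w.+1 by rewrite /c mod_succ wm //; lia.
  have wu : w != u 1 by apply/eqP => ew; move: cw; rewrite ew c_u //; lia.
  have [t [ht /andP[a1 a2]]] := @c_arc w.-1 ltac:(move/eqP: wu; lia) cw1.
  have ew : w = u t + l t.
    case: (ltnP w (u t + l t)) => h; last lia.
    by move: cw; rewrite (@arc_c t) //; rewrite /arc; lia.
  have g := h3 t ht.
  have := @e_le t ht => hle.
  have [t' [ht' /andP[b1 b2]]] := @c_arc w.+1 ltac:(lia) cw2.
  case: (leqP t' t) => htt.
    have := @endmono t' t ltac:(lia) ltac:(lia); lia.
  have hts : t < s by lia.
  move: g; rewrite /e hts => g.
  have := @umono t.+1 t' ltac:(lia) ltac:(lia); lia.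
Qed.

End Arcs.


Lemma decP (C : nat -> Prop) : {p : nat -> bool | forall x, C x <-> p x}.
Proof.
exists (fun x => if excluded_middle_informative (C x) then true else false).
by move=> x; case: excluded_middle_informative.
Qed.

Local Open Scope ring_scope.

Theorem proposition3p1 (k n : nat) (C : nat -> Prop) (s : nat) (u l : nat -> nat) :
  (2 <= k)%N -> (2 ^ k < n)%N ->
  is_min_rep n C s u l ->
  let c : int := (2 ^ k)%:Z - 2 in
  maximal_covered_set n k C <->
  [/\ (* (i) *)
      (u 1%N <> 1%N /\ (u s)%:Z + (l s)%:Z - 1 <> n%:Z - 2),
      (* (ii) *)
      ((forall t, (1 <= t < s)%N ->
          (u t.+1)%:Z - ((u t)%:Z + (l t)%:Z) >= 2) /\
       (u 1%N)%:Z - ((u s)%:Z + (l s)%:Z - n%:Z) >= 2) &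
      (* (iii) *)
      (((~ C 0%N /\ ~ C (n - 1)%N) /\
          (\sum_(1 <= t < s.+1) l t)%:Z = c + 1 - s%:Z) \/
       ((C 0%N \/ C (n - 1)%N) /\
          (\sum_(1 <= t < s.+1) l t)%:Z = c + 2 - s%:Z))].
Proof.
move=> hk hn hmin c; rewrite /c.
have [p hp] := decP C.
have hr := proj1 hmin.
have h4 : (4 <= 2 ^ k)%N by have := leq_pexp2l (isT : (0 < 2)%N) hk.
have n0 : (0 < n)%N by lia.
have hpn : forall x, p x -> (x < n)%N by move=> x /hp; apply: (@rep_lt n C s u l x n0 hr).
rewrite (@max_iff n k C p hn hp hpn).
have eN : (n - 1 = n.-1)%N by lia.
rewrite eN.
case: (posnP s) => s0.
  subst s.
  have pf : forall x, p x = false.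
    move=> x; apply/negP => /hp; rewrite (proj2 (proj2 hr)) => [[t [ht _]]]; lia.
  have hP : Pc p 0 n.-1 = n.-1.
    rewrite /Pc (eq_big_nat _ _ (F2 := fun _ => 1%N)).
      by rewrite sum_nat_const_nat; lia.
    by move=> x _; rewrite /bad !pf.
  rewrite hP big_geq //; split.
    by move=> [_ e]; lia.
  move=> [_ _ [[_ e]|[[/hp|/hp] _]]]; rewrite ?pf //; lia.
have hu1 := (proj1 (proj2 hr)) 1%N ltac:(lia).
have hus := (proj1 (proj2 hr)) s ltac:(lia).
have hM1 := @M1 n C s u l hmin.
have hM2 := @M2 n C s u l hmin.
case: (ltnP (u s + l s) (u 1%N + n)) => hM3; last first.
  have s1 : s = 1%N.
    case: (ltnP 1 s) => h; last lia.
    by have := @M3 n C s u l hmin h; lia.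
  subst s.
  have pt : forall x, (x < n)%N -> p x.
    move=> x hx; apply/hp; apply/(proj2 (proj2 hr)); exists 1%N; split=> //.
    exists (if (u 1 <= x)%N then x else (x + n)%N); split.
      by case: ifP; lia.
    by case: ifP => _; rewrite ?modnDr modn_small.
  have hP : Pc p 0 n.-1 = 0%N.
    rewrite /Pc big_nat big1 // => x hx; rewrite /bad pt //; lia.
  rewrite hP; split.
    by move=> [_ e]; lia.
  by move=> [_ [_ h] _]; lia.
have n3 : (2 < n)%N by lia.
have hcnt := @count_all n C s u l p n3 s0 hr hM1 hM2 hM3 hp.
have eS : (\sum_(1 <= t < s.+1) (l t).+1 = \sum_(1 <= t < s.+1) l t + s)%N.
  rewrite (eq_bigr (fun t => l t + 1)%N); last by move=> i _; rewrite addn1.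
  by rewrite big_split /= sum_nat_const_nat; lia.
rewrite (@Q_Pc n s u l p n3 s0 hM3) eS in hcnt.
rewrite (@I2_char n C s u l p n3 s0 hr hM1 hM2 hM3 hp).
have eC0 : C 0%N <-> p 0%N by apply: hp.
have eCn : C n.-1 <-> p n.-1 by apply: hp.
have ee : forall t, (1 <= t <= s)%N -> e n s u t = if (t < s)%N then u t.+1 else (u 1%N + n)%N.
  by [].
move: hcnt; move: (\sum_(1 <= i < s.+1) l i)%N => S hcnt.
split.
- move=> [[h1 h2 h3] hP]; split.
  + split=> //; lia.
  + split.
      move=> t ht; have := h3 t ltac:(lia); rewrite /e; case: ifP; lia.
    have := h3 s ltac:(lia); rewrite /e ltnn; lia.
  + move: hcnt hP; rewrite eC0 eCn.
    case: (p 0%N); case: (p n.-1) => /= hc hP.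
    * by right; split; [left|lia].
    * by right; split; [left|lia].
    * by right; split; [right|lia].
    * by left; split; [split|lia].
- move=> [[i1 i2] [ii1 ii2] iii]; split; first split.
  + lia.
  + lia.
  + move=> t ht; rewrite /e; case: ifP => h.
      have := ii1 t ltac:(lia); lia.
    have -> : t = s by lia.
    lia.
  + move: hcnt iii; rewrite eC0 eCn.
    case: (p 0%N); case: (p n.-1) => /= hc [[[h1 h2] h]|[[h1|h1] h]]; lia.
Qed.
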